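(* Let $n\ge 1$, $N=n^2$, and let $Q$ be an $n\times n$ square block of grid cells. For every bijection $\pi:Q\to Q$ there is a set $O$ of $4N+1$ obstacle cells, all contained in a $(3N+1)\times(3N+1)$ square region of the grid that also contains $Q$, with the following property. Place $N$ robots on the cells of $Q$ (one per cell) with the obstacle set $O$, and apply the four force-field moves $\langle u,r,d,l\rangle$ in this order. Then, for every $c\in Q$, the robot that started at $c$ ends at cell $\pi(c)$. Moreover, if every robot moves at speed $v$ cells per second, the four moves are completed within total time $10N/v$.
   Context: Model. The workspace is the integer grid $\mathbb{Z}^2$ of unit cells. A configuration consists of a finite set $O\subset\mathbb{Z}^2$ of fixed obstacle cells and finitely many labeled robots, each occupying one cell, with no two robots in the same cell and no robot on an obstacle cell. There are four commands $u,r,d,l$ with direction vectors $e_u=(0,1)$, $e_r=(1,0)$, $e_d=(0,-1)$, $e_l=(-1,0)$. Applying command $x$ (a force-field move) moves all robots simultaneously in direction $e_x$ as far as possible, each stopping when it hits an obstacle or a stopped robot: precisely, for a robot at cell $p$, let $q=p+s e_x$ ($s\ge1$) be the first obstacle cell on the ray $p+te_x$, $t=1,2,\dots$; the robot ends at cell $q-(k+1)e_x$, where $k$ is the number of robots located at cells $p+te_x$ with $0<t<s$. (The move is only considered when each such ray meets an obstacle.) A move sequence such as $\langle u,r,d,l\rangle$ means applying these commands one after another. *)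

(* Defs.v *)
From Stdlib Require Import ZArith List Reals Lia.
Open Scope Z_scope.

Definition cell := (Z * Z)%type.

Inductive cmd := Cu | Cr | Cd | Cl.

Definition dirv (x : cmd) : cell :=
  match x with
  | Cu => (0, 1) | Cr => (1, 0) | Cd => (0, -1) | Cl => (-1, 0)
  end.

Definition addc (p : cell) (t : Z) (e : cell) : cell :=
  (fst p + t * fst e, snd p + t * snd e).

Definition cell_eqb (c c' : cell) : bool :=
  Z.eqb (fst c) (fst c') && Z.eqb (snd c) (snd c').

Definition first_obstacle (O : list cell) (p e : cell) (s : Z) : Prop :=
  1 <= s /\ In (addc p s e) O /\
  (forall t, 1 <= t < s -> ~ In (addc p t e) O).

(* c = p + t e for some 0 < t < s  (e a unit axis vector) *)
Definition on_open_seg (p e : cell) (s : Z) (c : cell) : bool :=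
  let t := (fst c - fst p) * fst e + (snd c - snd p) * snd e in
  (0 <? t) && (t <? s) && cell_eqb c (addc p t e).

Definition count_between (conf : list cell) (p e : cell) (s : Z) : nat :=
  length (filter (on_open_seg p e s) conf).

(* A configuration of labeled robots is a list of cells: robot i is at
   position [nth i conf]. [step O x conf conf'] : applying command x to
   conf (with obstacle set O) is defined (every ray meets an obstacle) and
   yields conf'. Robot at p ends at q - (k+1) e = p + (s-k-1) e. *)
Definition step (O : list cell) (x : cmd) (conf conf' : list cell) : Prop :=
  length conf' = length conf /\
  forall i, (i < length conf)%nat ->
    let p := nth i conf (0, 0) in
    exists s, first_obstacle O p (dirv x) s /\
      nth i conf' (0, 0) =
        addc p (s - Z.of_nat (count_between conf p (dirv x) s) - 1) (dirv x).

Definition dist (c c' : cell) : Z :=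
  Z.abs (fst c - fst c') + Z.abs (snd c - snd c').

Definition maxdisp (conf conf' : list cell) : Z :=
  fold_right Z.max 0 (map (fun pr => dist (fst pr) (snd pr)) (combine conf conf')).

Definition move_time (v : R) (conf conf' : list cell) : R :=
  (IZR (maxdisp conf conf') / v)%R.

Definition in_block (a b : Z) (n : nat) (c : cell) : Prop :=
  a <= fst c < a + Z.of_nat n /\ b <= snd c < b + Z.of_nat n.

Definition block_list (a b : Z) (n : nat) : list cell :=
  flat_map (fun i => map (fun j => (a + Z.of_nat i, b + Z.of_nat j)) (seq 0 n))
           (seq 0 n).

Definition in_square (x0 y0 : Z) (m : Z) (c : cell) : Prop :=
  x0 <= fst c <= x0 + m /\ y0 <= snd c <= y0 + m.

(* Main.v *)
From Pilot Require Import Defs.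
From Stdlib Require Import ZArith List Reals Lia Permutation.
Open Scope Z_scope.

Lemma NoDup_map_on {A B} (f : A -> B) l :
  NoDup l -> (forall x y, In x l -> In y l -> f x = f y -> x = y) -> NoDup (map f l).
Proof.
  induction l as [|x l IH]; intros Hn Hi; simpl; constructor.
  - intro H. apply in_map_iff in H as [y [E Hy]].
    inversion Hn; subst. assert (y = x) by (apply Hi; simpl; auto). subst; contradiction.
  - inversion Hn; subst. apply IH; auto. intros; apply Hi; simpl; auto.
Qed.

Lemma NoDup_flat_map' {A B} (f : A -> list B) l :
  NoDup l -> (forall x, In x l -> NoDup (f x)) ->
  (forall x y z, In x l -> In y l -> In z (f x) -> In z (f y) -> x = y) ->
  NoDup (flat_map f l).
Proof.
  induction l as [|x l IH]; intros Hn Hf Hd; simpl; [constructor|].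
  inversion Hn; subst. apply NoDup_app.
  - apply Hf; simpl; auto.
  - apply IH; auto. intros; apply Hf; simpl; auto. intros; apply Hd with z; simpl; auto.
  - intros z Hz Hz'. apply in_flat_map in Hz' as [y [Hy Hzy]].
    assert (x = y) by (apply Hd with z; simpl; auto). subst; contradiction.
Qed.

Lemma in_block_list a b n c : In c (block_list a b n) <-> in_block a b n c.
Proof.
  unfold block_list, in_block. rewrite in_flat_map. split.
  - intros [i [Hi Hc]]. apply in_map_iff in Hc as [j [E Hj]]. subst c.
    apply in_seq in Hi; apply in_seq in Hj. simpl. lia.
  - destruct c as [x y]; simpl; intros H.
    exists (Z.to_nat (x - a)). split. apply in_seq; lia.
    apply in_map_iff. exists (Z.to_nat (y - b)). split. f_equal; lia. apply in_seq; lia.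
Qed.

Lemma NoDup_block_list a b n : NoDup (block_list a b n).
Proof.
  unfold block_list. apply NoDup_flat_map'.
  - apply seq_NoDup.
  - intros i _. apply NoDup_map_on. apply seq_NoDup. intros x y _ _ E. injection E; lia.
  - intros x y z _ _ H1 H2. apply in_map_iff in H1 as [u [E1 _]]. apply in_map_iff in H2 as [w [E2 _]].
    subst z. injection E2; lia.
Qed.

Lemma length_block_list a b n : length (block_list a b n) = (n * n)%nat.
Proof.
  unfold block_list. rewrite (flat_map_constant_length (c:=n)). now rewrite length_seq.
  intros; now rewrite length_map, length_seq.
Qed.

Lemma on_open_seg_iff p x s c :
  on_open_seg p (dirv x) s c = true <-> exists t, 0 < t < s /\ c = addc p t (dirv x).
Proof.
  destruct p as [p1 p2], c as [c1 c2].
  unfold on_open_seg, addc, cell_eqb; destruct x; simpl;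
  rewrite !Bool.andb_true_iff, !Z.ltb_lt, !Z.eqb_eq; split;
  [ intros [[? ?] [? ?]]; eexists; split; [|f_equal]; [split; eassumption| |]; lia
  | intros [t [? E]]; injection E; intros; subst; repeat split; lia
  | intros [[? ?] [? ?]]; eexists; split; [|f_equal]; [split; eassumption| |]; lia
  | intros [t [? E]]; injection E; intros; subst; repeat split; lia
  | intros [[? ?] [? ?]]; eexists; split; [|f_equal]; [split; eassumption| |]; lia
  | intros [t [? E]]; injection E; intros; subst; repeat split; lia
  | intros [[? ?] [? ?]]; eexists; split; [|f_equal]; [split; eassumption| |]; lia
  | intros [t [? E]]; injection E; intros; subst; repeat split; lia ].
Qed.

Lemma count_eq conf p x s m : NoDup conf -> NoDup m ->
  (forall c, (In c conf /\ exists t, 0 < t < s /\ c = addc p t (dirv x)) <-> In c m) ->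
  count_between conf p (dirv x) s = length m.
Proof.
  intros H1 H2 H3. unfold count_between. apply Permutation_length, NoDup_Permutation.
  apply NoDup_filter; auto. auto.
  intro c. rewrite filter_In, on_open_seg_iff. apply H3.
Qed.

Lemma step_map O x (l : list cell) F G :
  (forall c, In c l -> exists s, first_obstacle O (F c) (dirv x) s /\
     G c = addc (F c) (s - Z.of_nat (count_between (map F l) (F c) (dirv x) s) - 1) (dirv x)) ->
  step O x (map F l) (map G l).
Proof.
  intros H. split. now rewrite !length_map.
  intros i Hi. rewrite length_map in Hi.
  rewrite (nth_indep _ _ (F (0,0))) by now rewrite length_map.
  rewrite (nth_indep (map G l) _ (G (0,0))) by now rewrite length_map.
  rewrite !map_nth. apply H. apply nth_In; auto.
Qed.

Lemma combine_map {A B C} (F : A -> B) (G : A -> C) l :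
  combine (map F l) (map G l) = map (fun c => (F c, G c)) l.
Proof. induction l; simpl; congruence. Qed.

Lemma maxdisp_le (l : list cell) F G B : 0 <= B ->
  (forall c, In c l -> Pilot.Defs.dist (F c) (G c) <= B) -> maxdisp (map F l) (map G l) <= B.
Proof.
  intros HB H. unfold maxdisp. rewrite combine_map, map_map. simpl.
  induction l; simpl; [lia|]. apply Z.max_lub. apply H; simpl; auto.
  apply IHl. intros; apply H; simpl; auto.
Qed.

Lemma divu i j i' j' n : 0 <= j < n -> 0 <= j' < n -> i * n + j = i' * n + j' -> i = i' /\ j = j'.
Proof.
  intros. destruct (Z.lt_trichotomy i i') as [Hl|[He|Hl]].
  - assert (i * n + n <= i' * n) by nia. lia.
  - subst; lia.
  - assert (i' * n + n <= i * n) by nia. lia.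
Qed.

Definition kk a b n (c : cell) := (fst c - a) * Z.of_nat n + (snd c - b).
Definition tt a b n (e : cell) := (snd e - b) * Z.of_nat n + (fst e - a).
Definition Yc a b n c := b + Z.of_nat n + kk a b n c.
Definition Xt a b n e := a + Z.of_nat n + 2 * tt a b n e.

Definition uobs a b n := map (fun i => (a + Z.of_nat i, b + Z.of_nat n + (Z.of_nat i * Z.of_nat n + Z.of_nat n))) (seq 0 n).
Definition robs a b n (pi : cell -> cell) := map (fun c => (Xt a b n (pi c) + 1, Yc a b n c)) (block_list a b n).
Definition dobs a b n := map (fun e => (Xt a b n e, snd e - 1)) (block_list a b n).
Definition lobs a b n := map (fun j => (a - 1, b + Z.of_nat j)) (seq 0 n).
Definition pobs a b n := map (fun r => (a - 1, b - 1 - Z.of_nat r)) (seq 0 (2 * (n * n) - 2 * n + 1)).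
Definition Obs a b n pi := uobs a b n ++ robs a b n pi ++ dobs a b n ++ lobs a b n ++ pobs a b n.

Lemma kk_bnd a b n c : in_block a b n c -> 0 <= kk a b n c /\ kk a b n c + 1 <= Z.of_nat n * Z.of_nat n.
Proof. unfold in_block, kk; intros; nia. Qed.
Lemma tt_bnd a b n c : in_block a b n c -> 0 <= tt a b n c /\ tt a b n c + 1 <= Z.of_nat n * Z.of_nat n.
Proof. unfold in_block, tt; intros; nia. Qed.

Lemma kk_inj a b n c d : in_block a b n c -> in_block a b n d -> kk a b n c = kk a b n d -> c = d.
Proof.
  unfold in_block, kk; destruct c as [x y], d as [x' y']; simpl; intros H1 H2 E.
  apply divu in E; [|lia|lia]. f_equal; lia.
Qed.
Lemma tt_inj a b n c d : in_block a b n c -> in_block a b n d -> tt a b n c = tt a b n d -> c = d.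
Proof.
  unfold in_block, tt; destruct c as [x y], d as [x' y']; simpl; intros H1 H2 E.
  apply divu in E; [|lia|lia]. f_equal; lia.
Qed.

Lemma In_Obs a b n pi c : In c (Obs a b n pi) ->
  (exists i, 0 <= i < Z.of_nat n /\ c = (a + i, b + Z.of_nat n + (i * Z.of_nat n + Z.of_nat n))) \/
  (exists d, in_block a b n d /\ c = (Xt a b n (pi d) + 1, Yc a b n d)) \/
  (exists e, in_block a b n e /\ c = (Xt a b n e, snd e - 1)) \/
  (exists j, 0 <= j < Z.of_nat n /\ c = (a - 1, b + j)) \/
  (exists r, 0 <= r <= 2 * Z.of_nat n * Z.of_nat n - 2 * Z.of_nat n /\ c = (a - 1, b - 1 - r)).
Proof.
  unfold Obs, uobs, robs, dobs, lobs, pobs; rewrite !in_app_iff, !in_map_iff.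
  intros [[i [E Hi]]|[[d [E Hd]]|[[e [E He]]|[[j [E Hj]]|[r [E Hr]]]]]]; subst c.
  - left. exists (Z.of_nat i). apply in_seq in Hi. split; [lia|auto].
  - right; left. exists d. split; auto. now apply in_block_list.
  - right; right; left. exists e. split; auto. now apply in_block_list.
  - right; right; right; left. exists (Z.of_nat j). apply in_seq in Hj. split; [lia|auto].
  - right; right; right; right. exists (Z.of_nat r). apply in_seq in Hr. split; [|auto].
    assert (n <= n * n)%nat by nia. nia.
Qed.

Ltac obs_cases H :=
  apply In_Obs in H;
  destruct H as [[?i [?Hi ?E]]|[[?d [?Hd ?E]]|[[?e [?He ?E]]|[[?j [?Hj ?E]]|[?r [?Hr ?E]]]]]];
  unfold addc in *; cbn [fst snd dirv addc In] in *; injection E; intros.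

Lemma move_u a b n pi : (1 <= n)%nat ->
  (forall c, in_block a b n c -> in_block a b n (pi c)) ->
  step (Obs a b n pi) Cu (map (fun c => c) (block_list a b n))
    (map (fun c => (fst c, Yc a b n c)) (block_list a b n)).
Proof.
  intros Hn Hpi1. apply step_map. intros c Hc. apply in_block_list in Hc.
  destruct c as [x y]. unfold in_block in Hc; cbn [fst snd dirv addc In] in Hc.
  assert (Hm: 0 <= (x - a) * Z.of_nat n) by nia.
  exists (b + Z.of_nat n + ((x - a) * Z.of_nat n + Z.of_nat n) - y). split.
  - split; [lia|split].
    + unfold Obs; apply in_or_app; left. unfold uobs; apply in_map_iff.
      exists (Z.to_nat (x - a)). split; [|apply in_seq; lia].
      rewrite Z2Nat.id by lia. unfold addc; cbn [fst snd dirv addc In]; f_equal; lia.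
    + intros t Ht H. obs_cases H.
      * assert (i = x - a) by lia. subst i. lia.
      * pose proof (tt_bnd _ _ _ _ (Hpi1 _ Hd)). unfold Xt in *. lia.
      * pose proof (tt_bnd _ _ _ _ He). unfold Xt in *. lia.
      * lia.
      * lia.
  - rewrite map_id.
    rewrite (count_eq _ _ _ _ (map (fun u => (x, y + 1 + Z.of_nat u)) (seq 0 (Z.to_nat (b + Z.of_nat n - 1 - y))))).
    + rewrite length_map, length_seq. unfold addc, Yc, kk; cbn [fst snd dirv addc In]. rewrite Z2Nat.id by lia. f_equal; lia.
    + apply NoDup_block_list.
    + apply NoDup_map_on. apply seq_NoDup. intros u w _ _ E. injection E; lia.
    + intros [cx cy]. split.
      * intros [Hin [t [Ht E]]]. apply in_block_list in Hin. unfold in_block in Hin; cbn [fst snd dirv addc In] in Hin.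
        unfold addc in E; cbn [fst snd dirv addc In] in E. injection E as E1 E2. apply in_map_iff.
        exists (Z.to_nat (t - 1)). split. f_equal; rewrite ?Z2Nat.id; lia. apply in_seq; lia.
      * intros H. apply in_map_iff in H as [u [E Hu]]. injection E as E1 E2. apply in_seq in Hu.
        split. apply in_block_list; unfold in_block; cbn [fst snd dirv addc In]; lia.
        exists (1 + Z.of_nat u). split. lia. unfold addc; cbn [fst snd dirv addc In]; f_equal. lia. lia.
Qed.

Lemma move_r a b n pi : (1 <= n)%nat ->
  (forall c, in_block a b n c -> in_block a b n (pi c)) ->
  step (Obs a b n pi) Cr (map (fun c => (fst c, Yc a b n c)) (block_list a b n))
    (map (fun c => (Xt a b n (pi c), Yc a b n c)) (block_list a b n)).
Proof.
  intros Hn Hpi1. apply step_map. intros c Hc. apply in_block_list in Hc.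
  pose proof (tt_bnd _ _ _ _ (Hpi1 _ Hc)) as Ht0. pose proof (kk_bnd _ _ _ _ Hc) as Hk0.
  destruct c as [x y]. pose proof Hc as Hc'. unfold in_block in Hc'; cbn [fst snd dirv addc In] in Hc'.
  exists (Xt a b n (pi (x, y)) + 1 - x). split.
  - split; [unfold Xt; lia|split].
    + unfold Obs; apply in_or_app; right; apply in_or_app; left. unfold robs; apply in_map_iff.
      exists (x, y). split; [|now apply in_block_list]. unfold addc; cbn [fst snd dirv addc In]; f_equal; lia.
    + intros t Ht H. obs_cases H.
      * assert (i * Z.of_nat n >= (x - a) * Z.of_nat n + Z.of_nat n) by nia.
        unfold Yc, kk in *; cbn [fst snd dirv addc In] in *. lia.
      * assert (d = (x, y)). { apply kk_inj with a b n; auto. unfold Yc in *; lia. }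
        subst d. lia.
      * pose proof (kk_bnd _ _ _ _ He). unfold in_block in He. unfold Yc in *. lia.
      * unfold Yc in *; lia.
      * unfold Yc in *; lia.
  - rewrite (count_eq _ _ _ _ nil).
    + change (Z.of_nat (length (@nil cell))) with 0. unfold addc; cbn [fst snd dirv addc In]. f_equal; lia.
    + apply NoDup_map_on. apply NoDup_block_list. intros c d Hc1 Hd1 E. injection E; intros.
      apply in_block_list in Hc1, Hd1. apply kk_inj with a b n; auto. unfold Yc in *; lia.
    + constructor.
    + intros c'. split; [|cbn [fst snd dirv addc In]; tauto]. intros [Hin [t [Ht E]]]. apply in_map_iff in Hin as [d [E2 Hd]].
      subst c'. unfold addc in E; cbn [fst snd dirv addc In] in E. injection E; intros. apply in_block_list in Hd.
      assert (d = (x, y)). { apply kk_inj with a b n; auto. unfold Yc in *; lia. }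
      subst d. cbn [fst snd dirv addc In] in *. lia.
Qed.

Lemma move_d a b n pi : (1 <= n)%nat ->
  (forall c, in_block a b n c -> in_block a b n (pi c)) ->
  (forall c c', in_block a b n c -> in_block a b n c' -> pi c = pi c' -> c = c') ->
  step (Obs a b n pi) Cd (map (fun c => (Xt a b n (pi c), Yc a b n c)) (block_list a b n))
    (map (fun c => (Xt a b n (pi c), snd (pi c))) (block_list a b n)).
Proof.
  intros Hn Hpi1 Hpi2. apply step_map. intros c Hc. apply in_block_list in Hc.
  pose proof (tt_bnd _ _ _ _ (Hpi1 _ Hc)) as Ht0. pose proof (kk_bnd _ _ _ _ Hc) as Hk0.
  pose proof (Hpi1 _ Hc) as Hp. pose proof Hp as Hp'. unfold in_block in Hp'.
  exists (Yc a b n c - snd (pi c) + 1). split.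
  - split; [unfold Yc; lia|split].
    + unfold Obs; apply in_or_app; right; apply in_or_app; right; apply in_or_app; left.
      unfold dobs; apply in_map_iff.
      exists (pi c). split; [|now apply in_block_list]. unfold addc; cbn [fst snd dirv addc In]; f_equal; lia.
    + intros t Ht H. obs_cases H.
      * unfold Xt in *. lia.
      * pose proof (tt_bnd _ _ _ _ (Hpi1 _ Hd)). unfold Xt in *. lia.
      * assert (e = pi c). { apply tt_inj with a b n; auto. unfold Xt in *; lia. }
        subst e. lia.
      * unfold Xt in *; lia.
      * unfold Xt in *; lia.
  - rewrite (count_eq _ _ _ _ nil).
    + change (Z.of_nat (length (@nil cell))) with 0. unfold addc; cbn [fst snd dirv addc In]. f_equal; lia.
    + apply NoDup_map_on. apply NoDup_block_list. intros c1 d Hc1 Hd1 E. injection E; intros.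
      apply in_block_list in Hc1, Hd1. apply kk_inj with a b n; auto. unfold Yc in *; lia.
    + constructor.
    + intros c'. split; [|cbn [fst snd dirv addc In]; tauto]. intros [Hin [t [Ht E]]]. apply in_map_iff in Hin as [d [E2 Hd]].
      subst c'. unfold addc in E; cbn [fst snd dirv addc In] in E. injection E; intros. apply in_block_list in Hd.
      assert (pi d = pi c). { apply tt_inj with a b n; auto. unfold Xt in *; lia. }
      assert (d = c) by auto. subst d. lia.
Qed.

Lemma move_l a b n pi : (1 <= n)%nat ->
  (forall c, in_block a b n c -> in_block a b n (pi c)) ->
  (forall c c', in_block a b n c -> in_block a b n c' -> pi c = pi c' -> c = c') ->
  (forall c', in_block a b n c' -> exists c, in_block a b n c /\ pi c = c') ->
  step (Obs a b n pi) Cl (map (fun c => (Xt a b n (pi c), snd (pi c))) (block_list a b n))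
    (map pi (block_list a b n)).
Proof.
  intros Hn Hpi1 Hpi2 Hpi3. apply step_map. intros c Hc. apply in_block_list in Hc.
  pose proof (Hpi1 _ Hc) as Hp. pose proof (tt_bnd _ _ _ _ Hp) as Ht0.
  remember (pi c) as pc eqn:Hpc. destruct pc as [x y].
  pose proof Hp as Hp'. unfold in_block in Hp'. cbn [fst snd] in *.
  assert (Htx: tt a b n (x, y) >= x - a).
  { unfold tt; cbn [fst snd]. nia. }
  exists (Xt a b n (x, y) - a + 1). split.
  - split; [unfold Xt; lia|split].
    + unfold Obs; apply in_or_app; right; apply in_or_app; right; apply in_or_app; right;
      apply in_or_app; left. unfold lobs; apply in_map_iff.
      exists (Z.to_nat (y - b)). split; [|apply in_seq; lia].
      rewrite Z2Nat.id by lia. unfold addc; cbn [fst snd dirv]. f_equal; lia.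
    + intros t Ht H. obs_cases H.
      * assert (0 <= i * Z.of_nat n) by nia. lia.
      * pose proof (kk_bnd _ _ _ _ Hd). unfold Yc in *. lia.
      * destruct e as [ex ey]. unfold in_block in He; cbn [fst snd] in *.
        assert (ey = y + 1) by lia. subst ey. unfold Xt, tt in *; cbn [fst snd] in *. lia.
      * unfold Xt in *; lia.
      * unfold Xt in *; lia.
  - rewrite (count_eq _ _ _ _ (map (fun u => (Xt a b n (x, y) - 2 * (Z.of_nat u + 1), y)) (seq 0 (Z.to_nat (x - a))))).
    + rewrite length_map, length_seq. rewrite Z2Nat.id by lia.
      unfold addc; cbn [fst snd dirv]. f_equal; lia.
    + apply NoDup_map_on. apply NoDup_block_list. intros c1 d Hc1 Hd1 E. injection E; intros.
      apply in_block_list in Hc1, Hd1. apply Hpi2; auto. apply tt_inj with a b n; auto. unfold Xt in *; lia.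
    + apply NoDup_map_on. apply seq_NoDup. intros u w _ _ E. apply pair_equal_spec in E; lia.
    + intros [cx cy]. split.
      * intros [Hin [t [Ht E]]]. apply in_map_iff in Hin as [d [E2 Hd]].
        apply in_block_list in Hd. pose proof (Hpi1 _ Hd) as Hpd.
        destruct (pi d) as [x2 y2] eqn:Hpid. unfold in_block in Hpd.
        unfold addc in E; cbn [fst snd dirv] in *. injection E2 as E3 E4. injection E as E5 E6.
        subst cx cy. assert (y2 = y) by lia. subst y2.
        unfold Xt, tt in *; cbn [fst snd] in *.
        apply in_map_iff. exists (Z.to_nat (x - x2 - 1)). split.
        -- f_equal; [rewrite Z2Nat.id by lia|]; lia.
        -- apply in_seq; lia.
      * intros H. apply in_map_iff in H as [u [E Hu]]. apply pair_equal_spec in E as [E1 E2]. apply in_seq in Hu.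
        destruct (Hpi3 (x - 1 - Z.of_nat u, y)) as [d [Hd Hpd]].
        { unfold in_block; cbn [fst snd]; lia. }
        split.
        -- apply in_map_iff. exists d. split; [|now apply in_block_list]. rewrite Hpd.
           cbn [snd]. f_equal; [|lia]. rewrite <- E1. unfold Xt, tt; cbn [fst snd]; lia.
        -- exists (2 * (Z.of_nat u + 1)). split. unfold Xt; lia.
           unfold addc; cbn [fst snd dirv]. f_equal; lia.
Qed.

Ltac bnds Hpi1 :=
  repeat match goal with
  | H : In _ (seq _ _) |- _ => apply in_seq in H
  | H : In _ (block_list _ _ _) |- _ => apply in_block_list in H
  | H : (_, _) = (_, _) |- _ => apply pair_equal_spec in H; destruct H
  end;
  repeat match goal with
  | H : in_block ?a ?b ?n ?d |- _ =>
      pose proof (kk_bnd _ _ _ _ H); pose proof (tt_bnd _ _ _ _ H);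
      pose proof (tt_bnd _ _ _ _ (Hpi1 _ H)); let Hq := fresh in pose proof (Hpi1 _ H) as Hq; unfold in_block in Hq;
      unfold in_block in H; destruct H
  end; unfold Xt, Yc in *; cbn [fst snd] in *.

Lemma NoDup_Obs a b n pi : (1 <= n)%nat ->
  (forall c, in_block a b n c -> in_block a b n (pi c)) ->
  NoDup (Obs a b n pi).
Proof.
  intros Hn Hpi1. unfold Obs.
  assert (HB := NoDup_block_list a b n).
  apply NoDup_app; [|apply NoDup_app; [|apply NoDup_app; [|apply NoDup_app|]|]|].
  - apply NoDup_map_on. apply seq_NoDup. intros u w _ _ E. apply pair_equal_spec in E; lia.
  - apply NoDup_map_on; auto. intros c d Hc Hd E. apply pair_equal_spec in E as [_ E].
    apply in_block_list in Hc, Hd. apply kk_inj with a b n; auto. unfold Yc in E; lia.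
  - apply NoDup_map_on; auto. intros c d Hc Hd E. apply pair_equal_spec in E as [E _].
    apply in_block_list in Hc, Hd. apply tt_inj with a b n; auto. unfold Xt in E; lia.
  - apply NoDup_map_on. apply seq_NoDup. intros u w _ _ E. apply pair_equal_spec in E; lia.
  - apply NoDup_map_on. apply seq_NoDup. intros u w _ _ E. apply pair_equal_spec in E; lia.
  - intros x H1 H2. unfold lobs, pobs in *. apply in_map_iff in H1 as [? [<- ?]].
    apply in_map_iff in H2 as [? [? ?]]. bnds Hpi1. lia.
  - intros x H1 H2. unfold dobs, lobs, pobs in *. apply in_map_iff in H1 as [? [<- ?]].
    rewrite in_app_iff in H2. destruct H2 as [H2|H2]; apply in_map_iff in H2 as [? [? ?]]; bnds Hpi1; lia.
  - intros x H1 H2. unfold robs, dobs, lobs, pobs in *. apply in_map_iff in H1 as [? [<- ?]].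
    rewrite !in_app_iff in H2. destruct H2 as [H2|[H2|H2]]; apply in_map_iff in H2 as [? [? ?]]; bnds Hpi1; lia.
  - intros x H1 H2. unfold uobs, robs, dobs, lobs, pobs in *. apply in_map_iff in H1 as [? [<- ?]].
    rewrite !in_app_iff in H2. destruct H2 as [H2|[H2|[H2|H2]]]; apply in_map_iff in H2 as [? [? ?]]; bnds Hpi1; lia.
Qed.

Lemma length_Obs a b n pi : length (Obs a b n pi) = (4 * (n * n) + 1)%nat.
Proof.
  unfold Obs, uobs, robs, dobs, lobs, pobs. rewrite !length_app, !length_map, !length_seq, !length_block_list.
  assert (n <= n * n)%nat by nia. lia.
Qed.

Lemma Obs_bounds a b n pi : (1 <= n)%nat ->
  (forall c, in_block a b n c -> in_block a b n (pi c)) ->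
  forall c, (In c (Obs a b n pi) \/ in_block a b n c) ->
  in_square (a - 1) (b + Z.of_nat n - 2 * (Z.of_nat n * Z.of_nat n)) (3 * (Z.of_nat n * Z.of_nat n)) c /\
  (In c (Obs a b n pi) -> ~ in_block a b n c).
Proof.
  intros Hn Hpi1 c Hc. assert (Hnn: Z.of_nat n <= Z.of_nat n * Z.of_nat n) by nia.
  unfold in_square. destruct Hc as [H|H].
  - pose proof H as H0. apply In_Obs in H; destruct H as [[?i [?Hi ?E]]|[[?d [?Hd ?E]]|[[?e [?He ?E]]|[[?j [?Hj ?E]]|[?r [?Hr ?E]]]]]]; subst c.
    + assert (i * Z.of_nat n + Z.of_nat n <= Z.of_nat n * Z.of_nat n) by nia.
      assert (0 <= i * Z.of_nat n) by nia.
      split; [cbn [fst snd]; lia|]. intros _ Hb; unfold in_block in Hb; cbn [fst snd] in Hb; lia.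
    + pose proof Hd as Hd'. bnds Hpi1. split; [lia|]. intros _ Hb; unfold in_block in Hb; cbn [fst snd] in Hb; lia.
    + pose proof He as He'. bnds Hpi1. split; [lia|]. intros _ Hb; unfold in_block in Hb; cbn [fst snd] in Hb; lia.
    + cbn [fst snd]. split; [lia|]. intros _ Hb; unfold in_block in Hb; cbn [fst snd] in Hb; lia.
    + cbn [fst snd]. split; [lia|]. intros _ Hb; unfold in_block in Hb; cbn [fst snd] in Hb; lia.
  - split.
    + unfold in_block in H. lia.
    + intros H1. pose proof H1 as H0. apply In_Obs in H1; destruct H1 as [[?i [?Hi ?E]]|[[?d [?Hd ?E]]|[[?e [?He ?E]]|[[?j [?Hj ?E]]|[?r [?Hr ?E]]]]]]; subst c.
      * assert (0 <= i * Z.of_nat n) by nia. unfold in_block in H; cbn [fst snd] in H; lia.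
      * bnds Hpi1. lia.
      * bnds Hpi1. lia.
      * unfold in_block in H; cbn [fst snd] in H; lia.
      * unfold in_block in H; cbn [fst snd] in H; lia.
Qed.

Theorem theorem1 (n : nat) (a b : Z) (pi : cell -> cell) :
  (1 <= n)%nat ->
  (forall c, in_block a b n c -> in_block a b n (pi c)) ->
  (forall c c', in_block a b n c -> in_block a b n c' -> pi c = pi c' -> c = c') ->
  (forall c', in_block a b n c' -> exists c, in_block a b n c /\ pi c = c') ->
  let N := (n * n)%nat in
  exists O : list cell,
    NoDup O /\ length O = (4 * N + 1)%nat /\
    (exists x0 y0 : Z, forall c,
        (In c O \/ in_block a b n c) -> in_square x0 y0 (3 * Z.of_nat N) c) /\
    (forall c, in_block a b n c -> ~ In c O) /\
    let c0 := block_list a b n in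
    exists c1 c2 c3 c4 : list cell,
      step O Cu c0 c1 /\ step O Cr c1 c2 /\ step O Cd c2 c3 /\ step O Cl c3 c4 /\
      (forall i, (i < length c0)%nat -> nth i c4 (0, 0) = pi (nth i c0 (0, 0))) /\
      (forall v : R, (0 < v)%R ->
         (move_time v c0 c1 + move_time v c1 c2 + move_time v c2 c3
          + move_time v c3 c4 <= 10 * INR N / v)%R).
Proof.
  intros Hn Hpi1 Hpi2 Hpi3 N.
  assert (HN : Z.of_nat N = Z.of_nat n * Z.of_nat n) by (unfold N; lia).
  assert (Hnn: Z.of_nat n <= Z.of_nat n * Z.of_nat n) by nia.
  exists (Obs a b n pi). split; [now apply NoDup_Obs|]. split; [apply length_Obs|].
  split.
  { exists (a - 1), (b + Z.of_nat n - 2 * (Z.of_nat n * Z.of_nat n)). intros c Hc.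
    rewrite HN. now apply (Obs_bounds a b n pi Hn Hpi1 c Hc). }
  split.
  { intros c Hc H. apply (Obs_bounds a b n pi Hn Hpi1 c (or_introl H)); auto. }
  intros c0.
  assert (E0 : c0 = map (fun c => c) c0) by (symmetry; apply map_id).
  exists (map (fun c => (fst c, Yc a b n c)) c0),
         (map (fun c => (Xt a b n (pi c), Yc a b n c)) c0),
         (map (fun c => (Xt a b n (pi c), snd (pi c))) c0), (map pi c0).
  split. { rewrite E0 at 1. now apply move_u. }
  split. { now apply move_r. }
  split. { now apply move_d. }
  split. { now apply move_l. }
  split.
  { intros i Hi. rewrite (nth_indep _ _ (pi (0,0))) by now rewrite length_map.
    now rewrite map_nth. }
  intros v Hv.
  assert (D1 : maxdisp c0 (map (fun c => (fst c, Yc a b n c)) c0) <= Z.of_nat N).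
  { rewrite E0 at 1. apply maxdisp_le; [lia|]. intros c Hc. apply in_block_list in Hc.
    pose proof (kk_bnd _ _ _ _ Hc). destruct c as [x y]. unfold in_block in Hc.
    unfold Pilot.Defs.dist, Yc, kk in *; cbn [fst snd] in *.
    assert ((x - a) * Z.of_nat n + Z.of_nat n <= Z.of_nat n * Z.of_nat n) by nia.
    assert (0 <= (x - a) * Z.of_nat n) by nia. lia. }
  assert (D2 : maxdisp (map (fun c => (fst c, Yc a b n c)) c0)
                 (map (fun c => (Xt a b n (pi c), Yc a b n c)) c0) <= 3 * Z.of_nat N).
  { apply maxdisp_le; [lia|]. intros c Hc. apply in_block_list in Hc.
    pose proof (tt_bnd _ _ _ _ (Hpi1 _ Hc)). unfold in_block in Hc.
    unfold Pilot.Defs.dist, Xt in *; cbn [fst snd] in *. lia. }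
  assert (D3 : maxdisp (map (fun c => (Xt a b n (pi c), Yc a b n c)) c0)
                 (map (fun c => (Xt a b n (pi c), snd (pi c))) c0) <= 3 * Z.of_nat N).
  { apply maxdisp_le; [lia|]. intros c Hc. apply in_block_list in Hc.
    pose proof (kk_bnd _ _ _ _ Hc). pose proof (Hpi1 _ Hc) as Hq. unfold in_block in Hq.
    unfold Pilot.Defs.dist, Yc in *; cbn [fst snd] in *. lia. }
  assert (D4 : maxdisp (map (fun c => (Xt a b n (pi c), snd (pi c))) c0) (map pi c0)
                 <= 3 * Z.of_nat N).
  { rewrite (map_ext_in pi (fun c => pi c)) by auto.
    apply maxdisp_le; [lia|]. intros c Hc. apply in_block_list in Hc.
    pose proof (tt_bnd _ _ _ _ (Hpi1 _ Hc)). pose proof (Hpi1 _ Hc) as Hq. unfold in_block in Hq.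
    unfold Pilot.Defs.dist, Xt in *; cbn [fst snd] in *. lia. }
  unfold move_time. rewrite INR_IZR_INZ. unfold Rdiv.
  rewrite <- !Rmult_plus_distr_r, <- !plus_IZR, <- mult_IZR.
  apply Rmult_le_compat_r. left; now apply Rinv_0_lt_compat.
  apply IZR_le. lia.
Qed.
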